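(* Let $s,t$ be processes, $\mathcal{Z}_s\in\mathrm{res}(s)$ with initial state $z_s$ and $\mathcal{Z}_t\in\mathrm{res}(t)$ with initial state $z_t$. Then $\Psi_{\mathcal{Z}_s}=\Psi_{\mathcal{Z}_t}$ if and only if $\Pr(\mathcal{C}(z_s,\alpha))=\Pr(\mathcal{C}(z_t,\alpha))$ for all $\alpha\in A^\star$.
   Context: PTS $(\mathcal{S},A,\to)$ with finitely supported distributions; processes image-finite and finite. Computations $c=s_0\xrightarrow{a_1}\cdots\xrightarrow{a_n}s_n$ via transitions $s_{i-1}\xrightarrow{a_i}\pi_i$, $s_i\in\mathrm{supp}(\pi_i)$; $\Pr(c)=\prod\pi_i(s_i)$ (empty computation: 1); $\mathrm{tr}(c)=a_1\cdots a_n$; $\mathcal{C}(z,\alpha)$ = computations from $z$ with trace $\alpha$; maximal = not a proper prefix of another computation from the same process; $\mathcal{C}_{\max}(z)$, $\mathcal{C}_{\max}(z,\alpha)$; $\Pr$ of a set is the sum. A resolution of $s$ is a PTS $\mathcal{Z}=(Z,A,\to_{\mathcal{Z}})$ with $\mathrm{corr}\colon Z\to\mathcal{S}$ and initial state $z_s$, $\mathrm{corr}(z_s)=s$, such that $z_s$ is in no target support, every other state is in the support of a target of a transition from a different state, every $z\xrightarrow{a}_{\mathcal{Z}}\pi$ is matched by $\mathrm{corr}(z)\xrightarrow{a}\pi'$ with $\pi(z')=\pi'(\mathrm{corr}(z'))$, and each state has at most one outgoing transition. Trace formulae $\Phi::=\top\mid\langle a\rangle\Phi$; tracing formula $\Phi_\varepsilon=\top$,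 $\Phi_{a\alpha}=\langle a\rangle\Phi_\alpha$. Trace distribution formulae $\bigoplus_{i\in I}r_i\Phi_i$ ($I$ finite nonempty, $\Phi_i$ pairwise distinct, $r_i\in(0,1]$, $\sum r_i=1$) are identified with probability distributions on trace formulae; equality means equality of these distributions. Mimicking formula of $\mathcal{Z}$ with initial state $z$: $\Psi_{\mathcal{Z}}=\bigoplus_{\alpha\in\mathrm{tr}(\mathcal{C}_{\max}(z))}\Pr(\mathcal{C}_{\max}(z,\alpha))\,\Phi_\alpha$. *)

(* Defs.v *)
From Stdlib Require Import Reals List Classical ClassicalDescription ClassicalEpsilon.
Set Implicit Arguments.
Open Scope R_scope.

Section PTSDefs.
Variable A : Type.

Definition transrel (S : Type) := S -> A -> (S -> R) -> Prop.

Definition lsum (X : Type) (f : X -> R) (l : list X) : R :=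
  fold_right (fun x acc => f x + acc) 0 l.

Definition is_fs_distr (S : Type) (pi : S -> R) : Prop :=
  (forall x, 0 <= pi x) /\
  exists l : list S, NoDup l /\ (forall x, pi x <> 0 -> In x l) /\ lsum pi l = 1.

Definition wf_pts (S : Type) (T : transrel S) : Prop :=
  forall s a pi, T s a pi -> is_fs_distr pi.

Definition image_finite (S : Type) (T : transrel S) : Prop :=
  forall s a, exists l : list (S -> R), forall pi, T s a pi -> In pi l.

(* A computation from a state: the list of its steps (a_i, pi_i, s_i). *)
Definition comp (S : Type) := list (A * (S -> R) * S).

Inductive is_comp (S : Type) (T : transrel S) : S -> comp S -> Prop :=
| comp_nil : forall s, is_comp T s nil
| comp_cons : forall s a pi s' c,
    T s a pi -> 0 < pi s' -> is_comp T s' c -> is_comp T s ((a, pi, s') :: c).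

Definition Prc (S : Type) (c : comp S) : R :=
  fold_right (fun st acc => (snd (fst st)) (snd st) * acc) 1 c.

Definition tr (S : Type) (c : comp S) : list A := map (fun st => fst (fst st)) c.

Definition finite_proc (S : Type) (T : transrel S) (s : S) : Prop :=
  exists N : nat, forall c, is_comp T s c -> (length c <= N)%nat.

Definition Cset (S : Type) (T : transrel S) (z : S) (alpha : list A) (c : comp S) : Prop :=
  is_comp T z c /\ tr c = alpha.

Definition is_max_comp (S : Type) (T : transrel S) (z : S) (c : comp S) : Prop :=
  is_comp T z c /\ ~ (exists d, d <> nil /\ is_comp T z (c ++ d)).

Definition Cmax (S : Type) (T : transrel S) (z : S) (alpha : list A) (c : comp S) : Prop :=
  is_max_comp T z c /\ tr c = alpha.

(* Sum of f over a finite set P (given as a predicate); 0 if P is not finite. *)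
Definition enumerates (X : Type) (P : X -> Prop) (l : list X) : Prop :=
  NoDup l /\ forall x, In x l <-> P x.

Definition fsum (X : Type) (P : X -> Prop) (f : X -> R) : R :=
  match excluded_middle_informative (exists l, enumerates P l) with
  | left H => lsum f (proj1_sig (constructive_indefinite_description _ H))
  | right _ => 0
  end.

Definition PrSet (S : Type) (P : comp S -> Prop) : R := fsum P (@Prc S).

Definition is_resolution (S : Type) (T : transrel S) (s : S)
  (Z : Type) (TZ : transrel Z) (corr : Z -> S) (zs : Z) : Prop :=
  wf_pts TZ /\
  corr zs = s /\
  (forall z a pi, TZ z a pi -> ~ (0 < pi zs)) /\
  (forall z', z' <> zs -> exists z a pi, z <> z' /\ TZ z a pi /\ 0 < pi z') /\
  (forall z a pi, TZ z a pi ->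
     exists pi', T (corr z) a pi' /\ forall z', pi z' = pi' (corr z')) /\
  (forall z a1 pi1 a2 pi2, TZ z a1 pi1 -> TZ z a2 pi2 -> a1 = a2 /\ pi1 = pi2).

Inductive TF : Type :=
| TTop : TF
| TDiam : A -> TF -> TF.

Fixpoint tracing (alpha : list A) : TF :=
  match alpha with
  | nil => TTop
  | a :: alpha' => TDiam a (tracing alpha')
  end.

(* Mimicking formula, as the probability distribution on trace formulae
   it is identified with: Phi |-> sum of the weights r_i with Phi_i = Phi. *)
Definition mimicking (Z : Type) (TZ : transrel Z) (z : Z) : TF -> R :=
  fun Phi =>
    fsum (fun alpha => (exists c, is_max_comp TZ z c /\ tr c = alpha) /\ tracing alpha = Phi)
         (fun alpha => PrSet (Cmax TZ z alpha)).

End PTSDefs.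

(* Main.v *)
Require Import Defs.
From Stdlib Require Import Reals List.
Open Scope R_scope.
From Stdlib Require Import Permutation FinFun Lra Lia Classical ClassicalEpsilon FunctionalExtensionality PropExtensionality.

Definition cdec {X : Type} : forall x y : X, {x = y} + {x <> y} :=
  fun x y => excluded_middle_informative (x = y).

Definition Fin {X : Type} (P : X -> Prop) := exists l, forall x, In x l <-> P x.

Lemma lsum_app {X} (f : X -> R) l1 l2 : lsum f (l1 ++ l2) = lsum f l1 + lsum f l2.
Proof. induction l1; simpl; [lra| rewrite IHl1; lra]. Qed.

Lemma lsum_perm {X} (f : X -> R) l1 l2 : Permutation l1 l2 -> lsum f l1 = lsum f l2.
Proof. induction 1; simpl; try lra. Qed.

Lemma lsum_plus {X} (f g : X -> R) l : lsum (fun x => f x + g x) l = lsum f l + lsum g l.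
Proof. induction l; simpl; [lra| rewrite IHl; lra]. Qed.

Lemma lsum_scale {X} (f : X -> R) k l : lsum (fun x => k * f x) l = k * lsum f l.
Proof. induction l; simpl; [lra| rewrite IHl; lra]. Qed.

Lemma lsum_ext {X} (f g : X -> R) l : (forall x, In x l -> f x = g x) -> lsum f l = lsum g l.
Proof. induction l; simpl; intros H; auto. rewrite H, IHl; auto. Qed.

Lemma lsum_swap {X Y} (F : X -> Y -> R) I J :
  lsum (fun i => lsum (fun j => F i j) J) I = lsum (fun j => lsum (fun i => F i j) I) J.
Proof.
  induction I; simpl.
  - induction J; simpl; lra.
  - rewrite IHI, <- lsum_plus. reflexivity.
Qed.

Lemma lsum_nz {X} (f : X -> R) l : lsum f l <> 0 -> exists x, In x l /\ f x <> 0.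
Proof.
  induction l; simpl; intros H. lra.
  destruct (Req_EM_T (f a) 0).
  - destruct IHl as [x [? ?]]. lra. eauto.
  - eauto.
Qed.

Definition nzb {X} (f : X -> R) (x : X) : bool :=
  if Req_EM_T (f x) 0 then false else true.

Lemma lsum_filter {X} (f : X -> R) l : lsum f l = lsum f (filter (nzb f) l).
Proof.
  induction l; simpl; auto. unfold nzb at 1. destruct (Req_EM_T (f a) 0); simpl; lra.
Qed.

Lemma lsum_cover {X} (f : X -> R) l1 l2 : NoDup l1 -> NoDup l2 ->
  (forall x, f x <> 0 -> In x l1) -> (forall x, f x <> 0 -> In x l2) ->
  lsum f l1 = lsum f l2.
Proof.
  intros N1 N2 C1 C2. rewrite (lsum_filter f l1), (lsum_filter f l2).
  apply lsum_perm, NoDup_Permutation; try apply NoDup_filter; auto.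
  intros x; rewrite !filter_In; unfold nzb; destruct (Req_EM_T (f x) 0); split; intros [? ?]; try discriminate; split; auto.
Qed.

Lemma lsum_enum {X} (P : X -> Prop) f l1 l2 : enumerates P l1 -> enumerates P l2 ->
  lsum f l1 = lsum f l2.
Proof.
  intros [N1 H1] [N2 H2]. apply lsum_perm, NoDup_Permutation; auto.
  intros x; rewrite H1, H2; tauto.
Qed.

Lemma fsum_enum {X} (P : X -> Prop) f l : enumerates P l -> fsum P f = lsum f l.
Proof.
  intros H. unfold fsum. destruct excluded_middle_informative as [e|n].
  - destruct constructive_indefinite_description as [l' Hl']. simpl. eapply lsum_enum; eauto.
  - exfalso; eauto.
Qed.

Lemma fsum_scale {X} (P : X -> Prop) f k : fsum P (fun x => k * f x) = k * fsum P f.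
Proof.
  unfold fsum. destruct excluded_middle_informative; [apply lsum_scale| lra].
Qed.

Lemma fsum_ext {X} (P Q : X -> Prop) f : (forall x, P x <-> Q x) -> fsum P f = fsum Q f.
Proof.
  intros H. assert (P = Q) as ->; auto.
  extensionality x; apply propositional_extensionality; auto.
Qed.

Lemma fsum_fext {X} (P : X -> Prop) f g : (forall x, P x -> f x = g x) -> fsum P f = fsum P g.
Proof.
  intros H. unfold fsum. destruct excluded_middle_informative; auto.
  destruct constructive_indefinite_description as [l Hl]; simpl; destruct Hl as [_ Hl].
  apply lsum_ext; intros; apply H, Hl; auto.
Qed.

Lemma Fin_enum {X} (P : X -> Prop) : Fin P -> exists l, enumerates P l.
Proof.
  intros [l H]. exists (nodup cdec l). split. apply NoDup_nodup.
  intros x; rewrite nodup_In; auto.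
Qed.

Lemma fsum_empty {X} (P : X -> Prop) f : (forall x, ~ P x) -> fsum P f = 0.
Proof.
  intros H. rewrite (fsum_enum _ _ nil); auto. split. constructor.
  intros x; simpl; split; [tauto| apply H].
Qed.

Lemma fsum_single {X} (P : X -> Prop) f x0 : (forall x, P x <-> x = x0) -> fsum P f = f x0.
Proof.
  intros H. rewrite (fsum_enum _ _ (x0 :: nil)). simpl; lra.
  split. repeat constructor; simpl; tauto.
  intros x; simpl; rewrite H; intuition.
Qed.

Lemma Fin_sub {X} (P Q : X -> Prop) : Fin P -> (forall x, Q x -> P x) -> Fin Q.
Proof.
  intros [l H] HQ.
  exists (filter (fun x => if excluded_middle_informative (Q x) then true else false) l).
  intros x; rewrite filter_In, H. destruct excluded_middle_informative as [q|q]; split; [intros [? _]; auto | intros; split; auto | intros [_ e]; discriminate | intros; contradiction].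
Qed.

Lemma Fin_or {X} (P Q : X -> Prop) : Fin P -> Fin Q -> Fin (fun x => P x \/ Q x).
Proof.
  intros [l1 H1] [l2 H2]. exists (l1 ++ l2). intros x; rewrite in_app_iff, H1, H2; tauto.
Qed.

Lemma Fin_image {X Y} (E : X -> Prop) (g : X -> Y) : Fin E -> Fin (fun y => exists x, E x /\ y = g x).
Proof.
  intros [l H]. exists (map g l). intros y; rewrite in_map_iff. split.
  - intros [x [<- Hx]]. exists x; split; auto; apply H; auto.
  - intros [x [Hx ->]]. exists x; split; auto; apply H; auto.
Qed.

Lemma Fin_bigU {I X Y} (E : I -> X -> Prop) (g : I -> X -> Y) (L : list I) :
  (forall i, In i L -> Fin (E i)) ->
  Fin (fun y => exists i, In i L /\ exists x, E i x /\ y = g i x).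
Proof.
  induction L; intros H.
  - exists nil; intros y; simpl; split; [tauto| intros [i [[] _]]].
  - destruct (Fin_or _ _ (@Fin_image _ _ (E a) (g a) (H a (or_introl eq_refl))) (IHL (fun i Hi => H i (or_intror Hi))))
      as [l Hl].
    exists l; intros y; rewrite Hl; simpl. split.
    + intros [[x Hx]|[i [Hi Hx]]]; eauto.
    + intros [i [[<-|Hi] Hx]]; eauto.
Qed.

Lemma fsum_or {X} (P Q : X -> Prop) f : Fin P -> Fin Q -> (forall x, P x -> Q x -> False) ->
  fsum (fun x => P x \/ Q x) f = fsum P f + fsum Q f.
Proof.
  intros FP FQ D. destruct (Fin_enum _ FP) as [l1 [N1 H1]]. destruct (Fin_enum _ FQ) as [l2 [N2 H2]].
  rewrite (fsum_enum _ _ (l1 ++ l2)), (fsum_enum _ _ l1), (fsum_enum _ _ l2), lsum_app; try split; auto.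
  apply NoDup_app; auto. intros a Ha Hb; apply H1 in Ha; apply H2 in Hb; eauto.
  intros x; rewrite in_app_iff, H1, H2; tauto.
Qed.

Lemma fsum_image {X Y} (E : X -> Prop) (g : X -> Y) f : Fin E -> Injective g ->
  fsum (fun y => exists x, E x /\ y = g x) f = fsum E (fun x => f (g x)).
Proof.
  intros FE Ig. destruct (Fin_enum _ FE) as [l [N H]].
  rewrite (fsum_enum _ _ (map g l)), (fsum_enum _ _ l); try split; auto.
  - clear. induction l; simpl; auto. rewrite IHl; auto.
  - apply Injective_map_NoDup; auto.
  - intros y; rewrite in_map_iff. split.
    + intros [x [<- Hx]]. exists x; split; auto; apply H; auto.
    + intros [x [Hx ->]]. exists x; split; auto; apply H; auto.
Qed.

Lemma fsum_bigU {I X Y} (E : I -> X -> Prop) (g : I -> X -> Y) f (L : list I) :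
  NoDup L -> (forall i, In i L -> Fin (E i)) ->
  (forall i j x y, g i x = g j y -> i = j /\ x = y) ->
  fsum (fun y => exists i, In i L /\ exists x, E i x /\ y = g i x) f =
  lsum (fun i => fsum (E i) (fun x => f (g i x))) L.
Proof.
  induction L; intros N H Inj.
  - apply fsum_empty. intros y [i [[] _]].
  - simpl. apply NoDup_cons_iff in N as [Na N].
    rewrite <- IHL; [ | auto | intros; apply H; simpl; auto | auto].
    rewrite <- (fsum_image (E a) (g a)).
    2: apply H; simpl; auto.
    2: intros x y E'; apply (Inj a a x y E').
    rewrite <- fsum_or.
    + apply fsum_ext. intros y; simpl; split.
      * intros [i [[<-|Hi] Hx]]; eauto.
      * intros [[x Hx]|[i [Hi Hx]]]; eauto.
    + apply Fin_image; apply H; simpl; auto.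
    + apply Fin_bigU; intros; apply H; simpl; auto.
    + intros y [x [_ ->]] [i [Hi [x' [_ E']]]]. apply Inj in E' as [-> _]; auto.
Qed.

Set Implicit Arguments. Unset Strict Implicit.

Section Sys.
Variables (A Z : Type) (TZ : transrel A Z).
Hypothesis W : wf_pts TZ.
Hypothesis D : forall {z a1 pi1 a2 pi2}, TZ z a1 pi1 -> TZ z a2 pi2 -> a1 = a2 /\ pi1 = pi2.

Definition bounded (z : Z) n := forall c, is_comp TZ z c -> (length c <= n)%nat.
Definition Pz z alpha := PrSet (Cset TZ z alpha).
Definition Mz z alpha := PrSet (Cmax TZ z alpha).

Lemma support z a pi : TZ z a pi -> exists lpos, NoDup lpos /\ (forall x, In x lpos <-> 0 < pi x) /\ lsum pi lpos = 1.
Proof.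
  intros H. destruct (W H) as [Hp [l [N [C S1]]]].
  exists (filter (fun x => if Rlt_dec 0 (pi x) then true else false) l).
  assert (HI : forall x, In x (filter (fun x => if Rlt_dec 0 (pi x) then true else false) l) <-> 0 < pi x).
  { intros x; rewrite filter_In. destruct Rlt_dec as [q|q]; split.
    - tauto.
    - intros; split; auto. apply C; lra.
    - intros [_ e]; discriminate.
    - intros; contradiction. }
  split; [apply NoDup_filter; auto|]. split; auto.
  rewrite <- S1. apply lsum_cover; auto. apply NoDup_filter; auto.
  intros x Hx; apply HI; specialize (Hp x); lra.
Qed.

Lemma comp_inv z a pi z' c : is_comp TZ z ((a, pi, z') :: c) -> TZ z a pi /\ 0 < pi z' /\ is_comp TZ z' c.
Proof. intros H; inversion H; subst; auto. Qed.

Lemma bounded_step z n a pi z' : bounded z n -> TZ z a pi -> 0 < pi z' ->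
  exists m, n = S m /\ bounded z' m.
Proof.
  intros B H Hp. destruct n.
  - assert (Hc : is_comp TZ z ((a,pi,z') :: nil)) by (constructor; auto; constructor).
    apply B in Hc; simpl in Hc; lia.
  - exists n; split; auto. intros c Hc.
    assert (Hc' : is_comp TZ z ((a,pi,z') :: c)) by (constructor; auto).
    apply B in Hc'; simpl in Hc'; lia.
Qed.

Lemma Fin_comps n : forall z, bounded z n -> Fin (is_comp TZ z).
Proof.
  induction n; intros z B.
  - apply Fin_sub with (P := fun c => c = nil).
    + exists (nil :: nil); intros x; simpl; intuition.
    + intros c Hc; apply B in Hc; destruct c; simpl in *; auto; lia.
  - destruct (classic (exists a pi, TZ z a pi)) as [[a [pi H]]|NT].
    + destruct (support H) as [lpos [N [Hl S1]]].
      apply Fin_sub with (P := fun c => c = nil \/ exists z', In z' lpos /\ exists c', is_comp TZ z' c' /\ c = (a,pi,z') :: c').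
      * apply Fin_or. exists (nil :: nil); intros x; simpl; intuition.
        apply Fin_bigU. intros z' Hz'. apply Hl in Hz'.
        destruct (bounded_step B H Hz') as [m [Hm B']]. injection Hm as <-. eauto.
      * intros c Hc. destruct c as [|[[a' pi'] z'] c']; auto. right.
        apply comp_inv in Hc as [H1 [H2 H3]]. destruct (D H1 H) as [-> ->].
        exists z'; split; [apply Hl; auto|]. eauto.
    + apply Fin_sub with (P := fun c => c = nil).
      * exists (nil :: nil); intros x; simpl; intuition.
      * intros c Hc. destruct c as [|[[a' pi'] z'] c']; auto.
        apply comp_inv in Hc as [H1 _]. exfalso; eauto.
Qed.

Lemma P_nil z : Pz z nil = 1.
Proof.
  unfold Pz, PrSet. rewrite (fsum_single _ _ (nil : Defs.comp A Z)). reflexivity.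
  intros c; unfold Cset; split.
  - intros [_ Ht]. destruct c; auto; discriminate.
  - intros ->; split; auto; constructor.
Qed.

Lemma notrans_P z b al : (forall a pi, ~ TZ z a pi) -> Pz z (b :: al) = 0.
Proof.
  intros NT. unfold Pz, PrSet. apply fsum_empty. intros c [Hc Ht].
  destruct c as [|[[a' pi'] z'] c']; try discriminate. apply comp_inv in Hc as [H1 _]; eapply NT; eauto.
Qed.

Lemma notrans_M z b al : (forall a pi, ~ TZ z a pi) -> Mz z (b :: al) = 0.
Proof.
  intros NT. unfold Mz, PrSet. apply fsum_empty. intros c [[Hc _] Ht].
  destruct c as [|[[a' pi'] z'] c']; try discriminate. apply comp_inv in Hc as [H1 _]; eapply NT; eauto.
Qed.

Lemma notrans_M0 z : (forall a pi, ~ TZ z a pi) -> Mz z nil = 1.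
Proof.
  intros NT. unfold Mz, PrSet. rewrite (fsum_single _ _ (nil : Defs.comp A Z)). reflexivity.
  intros c; unfold Cmax, is_max_comp; split.
  - intros [_ Ht]. destruct c; auto; discriminate.
  - intros ->; split; auto. split; [constructor|]. intros [d [Hd Hc]]. simpl in Hc.
    destruct d as [|[[a' pi'] z'] c']; try congruence. apply comp_inv in Hc as [H1 _]; eapply NT; eauto.
Qed.

Lemma trans_M0 z a pi : TZ z a pi -> Mz z nil = 0.
Proof.
  intros H. destruct (support H) as [lpos [N [Hl S1]]].
  destruct lpos as [|z' lpos]; [simpl in S1; lra|].
  assert (Hz' : 0 < pi z') by (apply Hl; simpl; auto).
  unfold Mz, PrSet. apply fsum_empty. intros c [[Hc Hm] Ht].
  destruct c; try discriminate. apply Hm. exists ((a,pi,z')::nil); split; [discriminate|].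
  simpl. constructor; auto; constructor.
Qed.

Lemma trans_other_P z a pi b al : TZ z a pi -> a <> b -> Pz z (b :: al) = 0.
Proof.
  intros H Hab. unfold Pz, PrSet. apply fsum_empty. intros c [Hc Ht].
  destruct c as [|[[a' pi'] z'] c']; try discriminate. apply comp_inv in Hc as [H1 _].
  destruct (D H1 H) as [-> _]. simpl in Ht; injection Ht; auto.
Qed.

Lemma trans_other_M z a pi b al : TZ z a pi -> a <> b -> Mz z (b :: al) = 0.
Proof.
  intros H Hab. unfold Mz, PrSet. apply fsum_empty. intros c [[Hc _] Ht].
  destruct c as [|[[a' pi'] z'] c']; try discriminate. apply comp_inv in Hc as [H1 _].
  destruct (D H1 H) as [-> _]. simpl in Ht; injection Ht; auto.
Qed.

Lemma Prc_cons (a : A) (pi : Z -> R) z' c : Prc ((a, pi, z') :: c) = pi z' * Prc c.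
Proof. reflexivity. Qed.

Lemma max_cons z a pi z' c : TZ z a pi -> 0 < pi z' ->
  (is_max_comp TZ z ((a,pi,z') :: c) <-> is_max_comp TZ z' c).
Proof.
  intros H Hp; unfold is_max_comp; split.
  - intros [Hc Hm]. apply comp_inv in Hc as [_ [_ Hc]]. split; auto.
    intros [d [Hd Hcd]]. apply Hm; exists d; split; auto. simpl; constructor; auto.
  - intros [Hc Hm]. split; [constructor; auto|].
    intros [d [Hd Hcd]]. apply Hm; exists d; split; auto. simpl in Hcd.
    apply comp_inv in Hcd; tauto.
Qed.

Lemma trans_P z n a pi lpos al : bounded z n -> TZ z a pi -> NoDup lpos -> (forall x, In x lpos <-> 0 < pi x) ->
  Pz z (a :: al) = lsum (fun z' => pi z' * Pz z' al) lpos.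
Proof.
  intros B H N Hl. unfold Pz, PrSet.
  rewrite (fsum_ext _ (fun y => exists z', In z' lpos /\ exists c, Cset TZ z' al c /\ y = (a,pi,z') :: c)).
  - rewrite fsum_bigU; auto.
    + apply lsum_ext; intros z' _. rewrite <- fsum_scale. apply fsum_fext. intros; apply Prc_cons.
    + intros z' Hz'. apply Hl in Hz'. destruct (bounded_step B H Hz') as [m [_ B']].
      apply Fin_sub with (P := is_comp TZ z'). eapply Fin_comps; eauto. intros c [Hc _]; auto.
    + intros i j x y E. injection E; auto.
  - intros c; unfold Cset; split.
    + intros [Hc Ht]. destruct c as [|[[a' pi'] z'] c']; try discriminate.
      apply comp_inv in Hc as [H1 [H2 H3]]. destruct (D H1 H) as [-> ->].
      simpl in Ht; injection Ht as Ht. exists z'; split; [apply Hl; auto|]. eauto.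
    + intros [z' [Hz' [c' [[Hc Ht] ->]]]]. split; [constructor; auto; apply Hl; auto|].
      simpl; rewrite <- Ht; auto.
Qed.

Lemma trans_M z n a pi lpos al : bounded z n -> TZ z a pi -> NoDup lpos -> (forall x, In x lpos <-> 0 < pi x) ->
  Mz z (a :: al) = lsum (fun z' => pi z' * Mz z' al) lpos.
Proof.
  intros B H N Hl. unfold Mz, PrSet.
  rewrite (fsum_ext _ (fun y => exists z', In z' lpos /\ exists c, Cmax TZ z' al c /\ y = (a,pi,z') :: c)).
  - rewrite fsum_bigU; auto.
    + apply lsum_ext; intros z' _. rewrite <- fsum_scale. apply fsum_fext. intros; apply Prc_cons.
    + intros z' Hz'. apply Hl in Hz'. destruct (bounded_step B H Hz') as [m [_ B']].
      apply Fin_sub with (P := is_comp TZ z'). eapply Fin_comps; eauto. intros c [[Hc _] _]; auto.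
    + intros i j x y E. injection E; auto.
  - intros c; unfold Cmax; split.
    + intros [Hc Ht]. destruct c as [|[[a' pi'] z'] c']; try discriminate.
      pose proof Hc as Hc0. destruct Hc as [Hc _].
      apply comp_inv in Hc as [H1 [H2 H3]]. destruct (D H1 H) as [-> ->].
      simpl in Ht; injection Ht as Ht. exists z'; split; [apply Hl; auto|].
      exists c'; split; auto. split; auto. eapply max_cons; eauto.
    + intros [z' [Hz' [c' [[Hc Ht] ->]]]]. apply Hl in Hz'. split.
      * eapply max_cons; eauto.
      * simpl; rewrite <- Ht; auto.
Qed.

Lemma collect (l : list Z) (Rr : Z -> A -> Prop) :
  (forall z', In z' l -> exists L, forall a, Rr z' a -> In a L) ->
  exists L, NoDup L /\ forall z' a, In z' l -> Rr z' a -> In a L.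
Proof.
  induction l; intros H.
  - exists nil; split; [constructor| intros ? ? []].
  - destruct (H a (or_introl eq_refl)) as [L1 H1].
    destruct IHl as [L2 [_ H2]]. intros; apply H; simpl; auto.
    exists (nodup cdec (L1 ++ L2)); split; [apply NoDup_nodup|].
    intros z' b [<-|Hz'] Hr; rewrite nodup_In, in_app_iff; eauto.
Qed.

Lemma key : forall al z n, bounded z n -> exists L0, NoDup L0 /\
  (forall a, Pz z (al ++ a :: nil) <> 0 -> In a L0) /\
  Pz z al = Mz z al + lsum (fun a => Pz z (al ++ a :: nil)) L0.
Proof.
  induction al as [|b al IH]; intros z n B; simpl.
  - destruct (classic (exists a pi, TZ z a pi)) as [[a0 [pi H]]|NT].
    + destruct (support H) as [lpos [N [Hl S1]]].
      exists (a0 :: nil); split; [repeat constructor; simpl; tauto|]. split.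
      * intros a Ha. destruct (cdec a0 a) as [<-|ne]; simpl; auto.
        exfalso; apply Ha; eapply trans_other_P; eauto.
      * rewrite P_nil, (trans_M0 H). simpl. erewrite trans_P; eauto.
        rewrite (lsum_ext _ pi); [lra|]. intros; rewrite P_nil; lra.
    + assert (NT' : forall a pi, ~ TZ z a pi) by eauto.
      exists nil; split; [constructor|]. split.
      * intros a Ha; exfalso; apply Ha, notrans_P; auto.
      * rewrite P_nil, notrans_M0; auto. simpl; lra.
  - destruct (classic (exists a pi, TZ z a pi)) as [[a0 [pi H]]|NT].
    + destruct (cdec a0 b) as [<-|ne].
      * destruct (support H) as [lpos [N [Hl S1]]].
        destruct (@collect lpos (fun z' a => Pz z' (al ++ a :: nil) <> 0)) as [Lall [NL HL]].
        { intros z' Hz'. apply Hl in Hz'. destruct (bounded_step B H Hz') as [m [_ B']].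
          destruct (IH z' m B') as [L0 [_ [HL0 _]]]. eauto. }
        exists Lall; split; auto. split.
        -- intros a Ha. erewrite trans_P in Ha; eauto. apply lsum_nz in Ha as [z' [Hz' Ha]].
           apply (HL z'); auto. intros E; apply Ha; rewrite E; lra.
        -- erewrite trans_P, trans_M; eauto.
           rewrite (lsum_ext _ (fun z' => pi z' * Mz z' al + lsum (fun a => pi z' * Pz z' (al ++ a :: nil)) Lall)).
           ++ rewrite lsum_plus, lsum_swap. f_equal. apply lsum_ext; intros a _.
              symmetry; eapply trans_P; eauto.
           ++ intros z' Hz'. pose proof Hz' as Hz0. apply Hl in Hz'. destruct (bounded_step B H Hz') as [m [_ B']].
              destruct (IH z' m B') as [L0 [N0 [HL0 E0]]]. rewrite E0, lsum_scale.
              rewrite (lsum_cover _ L0 Lall); auto. lra.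
              intros a Ha; apply (HL z'); auto.
      * exists nil; split; [constructor|]. split.
        -- intros a Ha; exfalso; apply Ha; eapply trans_other_P; eauto.
        -- erewrite trans_other_P, trans_other_M; eauto. simpl; lra.
    + assert (NT' : forall a pi, ~ TZ z a pi) by eauto.
      exists nil; split; [constructor|]. split.
      * intros a Ha; exfalso; apply Ha, notrans_P; auto.
      * rewrite notrans_P, notrans_M; auto. simpl; lra.
Qed.

Lemma P_zero z n al : bounded z n -> (n < length al)%nat -> Pz z al = 0.
Proof.
  intros B Hl. unfold Pz, PrSet. apply fsum_empty. intros c [Hc Ht].
  apply B in Hc. unfold tr in Ht. rewrite <- Ht, length_map in Hl. lia.
Qed.

End Sys.

Lemma tracing_inj (A : Type) (a1 a2 : list A) : tracing a1 = tracing a2 -> a1 = a2.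
Proof.
  revert a2; induction a1; destruct a2; simpl; intros H; try discriminate; auto.
  injection H as -> H; f_equal; auto.
Qed.

Lemma tracing_surj (A : Type) (Phi : TF A) : exists al, Phi = tracing al.
Proof.
  induction Phi. exists nil; auto. destruct IHPhi as [al ->]. exists (a :: al); auto.
Qed.

Lemma mim_eq (A Z : Type) (TZ : transrel A Z) z al : mimicking TZ z (tracing al) = Mz TZ z al.
Proof.
  unfold mimicking. destruct (classic (exists c, is_max_comp TZ z c /\ tr c = al)) as [Ex|NE].
  - apply fsum_single. intros b; split.
    + intros [_ H]; apply tracing_inj; auto.
    + intros ->; auto.
  - rewrite fsum_empty. unfold Mz, PrSet. rewrite fsum_empty; auto.
    + intros c Hc; apply NE; exists c; auto.
    + intros b [Hb Ht]. apply tracing_inj in Ht; subst; auto.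
Qed.

Lemma res_comp (A S : Type) (T : transrel A S) s (Z : Type) (TZ : transrel A Z) corr zs :
  is_resolution T s TZ corr zs -> forall c z, is_comp TZ z c ->
  exists c', is_comp T (corr z) c' /\ length c' = length c.
Proof.
  intros (_ & _ & _ & _ & HM & _). induction c as [|[[a pi] z'] c IH]; intros z Hc.
  - exists nil; split; auto; constructor.
  - apply comp_inv in Hc as [H1 [H2 H3]]. destruct (HM _ _ _ H1) as [pi' [HT Hpi]].
    destruct (IH z' H3) as [c' [Hc' Hl]].
    exists ((a, pi', corr z') :: c'); split; simpl; auto.
    constructor; auto. rewrite <- Hpi; auto.
Qed.

Lemma res_bounded (A S : Type) (T : transrel A S) s (Z : Type) (TZ : transrel A Z) corr zs :
  is_resolution T s TZ corr zs -> finite_proc T s -> exists n, bounded TZ zs n.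
Proof.
  intros HR [N HN]. exists N. intros c Hc.
  destruct (res_comp HR Hc) as [c' [Hc' Hl]].
  destruct HR as (_ & Hs & _). rewrite Hs in Hc'. rewrite <- Hl; auto.
Qed.

Lemma cover_union (A : Type) (f1 f2 : A -> R) L1 L2 :
  (forall a, f1 a <> 0 -> In a L1) -> (forall a, f2 a <> 0 -> In a L2) ->
  exists L, NoDup L /\ (forall a, f1 a <> 0 -> In a L) /\ (forall a, f2 a <> 0 -> In a L).
Proof.
  intros H1 H2. exists (nodup cdec (L1 ++ L2)). split; [apply NoDup_nodup|].
  split; intros a Ha; rewrite nodup_In, in_app_iff; auto.
Qed.

Unset Implicit Arguments. Set Strict Implicit.

Theorem theorem9 (A S : Type) (T : transrel A S)
  (HT : wf_pts T) (Himf : image_finite T)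
  (s t : S) (Hs : finite_proc T s) (Ht : finite_proc T t)
  (Zs : Type) (TZs : transrel A Zs) (corrs : Zs -> S) (zs : Zs)
  (HZs : is_resolution T s TZs corrs zs)
  (Zt : Type) (TZt : transrel A Zt) (corrt : Zt -> S) (zt : Zt)
  (HZt : is_resolution T t TZt corrt zt) :
  mimicking TZs zs = mimicking TZt zt <->
  (forall alpha : list A, PrSet (Cset TZs zs alpha) = PrSet (Cset TZt zt alpha)).
Proof.
  destruct (res_bounded HZs Hs) as [ns Bs]. destruct (res_bounded HZt Ht) as [nt Bt].
  pose proof HZs as (Ws & _ & _ & _ & _ & Ds). pose proof HZt as (Wt & _ & _ & _ & _ & Dt).
  assert (Ks := fun al => key Ws Ds al Bs). assert (Kt := fun al => key Wt Dt al Bt).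
  change (mimicking TZs zs = mimicking TZt zt <-> (forall al, Pz TZs zs al = Pz TZt zt al)).
  assert (Dec : forall al, exists L, NoDup L /\
     Pz TZs zs al = Mz TZs zs al + lsum (fun a => Pz TZs zs (al ++ a :: nil)) L /\
     Pz TZt zt al = Mz TZt zt al + lsum (fun a => Pz TZt zt (al ++ a :: nil)) L).
  { intros al. destruct (Ks al) as [L1 [N1 [C1 E1]]]. destruct (Kt al) as [L2 [N2 [C2 E2]]].
    destruct (cover_union C1 C2) as [L [N [D1 D2]]]. exists L; split; auto. split.
    - rewrite E1 at 1. f_equal. apply lsum_cover; auto.
    - rewrite E2 at 1. f_equal. apply lsum_cover; auto. }
  split.
  - intros HM.
    assert (HM' : forall al, Mz TZs zs al = Mz TZt zt al).
    { intros al. rewrite <- !mim_eq, HM; auto. }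
    set (N := (ns + nt)%nat).
    assert (K : forall k al, (N < length al + k)%nat -> Pz TZs zs al = Pz TZt zt al).
    { induction k; intros al Hl.
      - rewrite (P_zero Bs), (P_zero Bt); auto; unfold N in *; lia.
      - destruct (Dec al) as [L [_ [E1 E2]]]. rewrite E1, E2, HM'. f_equal.
        apply lsum_ext; intros a _. apply IHk. rewrite length_app; simpl. lia. }
    intros al. apply (K (Datatypes.S N)). lia.
  - intros HP. extensionality Phi. destruct (tracing_surj Phi) as [al ->].
    rewrite !mim_eq. destruct (Dec al) as [L [_ [E1 E2]]].
    assert (Hs' : Mz TZs zs al = Pz TZs zs al - lsum (fun a => Pz TZs zs (al ++ a :: nil)) L) by lra.
    assert (Ht' : Mz TZt zt al = Pz TZt zt al - lsum (fun a => Pz TZt zt (al ++ a :: nil)) L) by lra.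
    rewrite Hs', Ht', HP. f_equal. apply lsum_ext; auto.
Qed.
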